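(* Let $\mathcal{H}$ be a finite class of classifiers $h:\mathcal{X}\times\{-1,1\}\to\{0,1\}$ containing the two classifiers $\mathbf{1}[a=1]$ and $\mathbf{1}[a=-1]$. Let $(\hat\pi,\hat\lambda)$ be a $\nu$-approximate saddle point of the Lagrangian $\mathcal{L}$ over $\Delta(\mathcal{H})\times\Lambda$. Then $$err(\hat\pi,\mathcal{P})\le\mathrm{OPT}+2\nu\quad\text{and}\quad\forall j\in\{\pm1\}:\ \mathrm{FPR}_j(\hat\pi)-\mathrm{FPR}_{-j}(\hat\pi)\le\gamma+2\nu.$$
   Context: Given points $X_1,\dots,X_n$ (each $X_j=(\hat x_j,a_j)$), labels $Y_j\in\{0,1\}$ and nonnegative weights $w_j$ with $\sum_j w_j=1$, let $err(h,\mathcal{P})=\sum_{j=1}^n w_j\mathbf{1}\{h(X_j)\neq Y_j\}$ and $err(\pi,\mathcal{P})=\mathbb{E}_{h\sim\pi}[err(h,\mathcal{P})]$ for $\pi\in\Delta(\mathcal{H})$. Let $\mathcal{D}_E$ be a fixed empirical distribution of labeled examples $(\hat x,a,y)$ containing negative examples of both groups, and for $j\in\{\pm1\}$ let $\mathrm{FPR}_j(\pi)=\mathbb{E}_{h\sim\pi}[\Pr_{\mathcal{D}_E}(h(x)=1\mid a=j,y\text{ negative})]$. Fix $\gamma\ge0$. $\mathrm{OPT}=\min\{err(\pi,\mathcal{P}):\pi\in\Delta(\mathcal{H}),\ \mathrm{FPR}_j(\pi)-\mathrm{FPR}_{-j}(\pi)\le\gamma\ \forall j\in\{\pm1\}\}$.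 The Lagrangian is $\mathcal{L}(\pi,\lambda)=err(\pi,\mathcal{P})+\sum_{j\in\{\pm1\}}\lambda_j(\mathrm{FPR}_j(\pi)-\mathrm{FPR}_{-j}(\pi)-\gamma)$ for $\lambda\in\mathbb{R}^2_+$, and $\Lambda=\{\lambda\in\mathbb{R}^2_+:\|\lambda\|_1\le2\}$. $(\hat\pi,\hat\lambda)\in\Delta(\mathcal{H})\times\Lambda$ is a $\nu$-approximate saddle point if $\mathcal{L}(\hat\pi,\hat\lambda)\le\mathcal{L}(g,\hat\lambda)+\nu$ for all $g\in\Delta(\mathcal{H})$ and $\mathcal{L}(\hat\pi,\hat\lambda)\ge\mathcal{L}(\hat\pi,\lambda)-\nu$ for all $\lambda\in\Lambda$. *)

(* Defs.v *)
From mathcomp Require Import all_boot all_order all_algebra.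
Set Implicit Arguments. Unset Strict Implicit. Unset Printing Implicit Defensive.
Import Order.TTheory GRing.Theory Num.Theory.
Local Open Scope ring_scope.

(* Conventions:
   - the group attribute a in {-1,1} is encoded by a bool: true <-> a = 1,
     false <-> a = -1; hence "-j" is "~~ j".
   - labels y in {0,1} and classifier outputs in {0,1} are bools (true <-> 1);
     "y negative" means y = 0, i.e. ~~ y.
   - a labeled example (x^, a, y) is a triple ((x^, a), y).
   - the hypothesis class H is given by a finite index type I and a map
     clf : I -> classifier; Delta(H) = probability vectors on I. *)

Section Defs.
Variable R : realFieldType.
Variable X : Type.

Definition classifier := X * bool -> bool.

Definition is_dist (I : finType) (pi : I -> R) : Prop :=
  (forall i, 0 <= pi i) /\ \sum_i pi i = 1.

Definition err_h (n : nat) (Xs : 'I_n -> X * bool) (Ys : 'I_n -> bool)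
  (w : 'I_n -> R) (h : classifier) : R :=
  \sum_(j < n) w j * (h (Xs j) != Ys j)%:R.

Definition err_pi (I : finType) (clf : I -> classifier) (n : nat)
  (Xs : 'I_n -> X * bool) (Ys : 'I_n -> bool) (w : 'I_n -> R) (pi : I -> R) : R :=
  \sum_i pi i * err_h Xs Ys w (clf i).

Definition neg_count (DE : seq (X * bool * bool)) (j : bool) : nat :=
  count (fun e => (e.1.2 == j) && ~~ e.2) DE.

Definition fp_count (DE : seq (X * bool * bool)) (j : bool) (h : classifier) : nat :=
  count (fun e => [&& e.1.2 == j, ~~ e.2 & h e.1]) DE.

Definition fpr_h (DE : seq (X * bool * bool)) (j : bool) (h : classifier) : R :=
  (fp_count DE j h)%:R / (neg_count DE j)%:R.

Definition FPR (I : finType) (clf : I -> classifier) (DE : seq (X * bool * bool))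
  (j : bool) (pi : I -> R) : R :=
  \sum_i pi i * fpr_h DE j (clf i).

Definition Lagr (I : finType) (clf : I -> classifier) (n : nat)
  (Xs : 'I_n -> X * bool) (Ys : 'I_n -> bool) (w : 'I_n -> R)
  (DE : seq (X * bool * bool)) (gamma : R) (pi : I -> R) (lam : bool -> R) : R :=
  err_pi clf Xs Ys w pi
  + \sum_(j : bool) lam j * (FPR clf DE j pi - FPR clf DE (~~ j) pi - gamma).

Definition in_Lambda (lam : bool -> R) : Prop :=
  (forall j, 0 <= lam j) /\ \sum_(j : bool) `|lam j| <= 2.

Definition approx_saddle (I : finType) (clf : I -> classifier) (n : nat)
  (Xs : 'I_n -> X * bool) (Ys : 'I_n -> bool) (w : 'I_n -> R)
  (DE : seq (X * bool * bool)) (gamma nu : R) (pi_hat : I -> R) (lam_hat : bool -> R) : Prop :=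
  [/\ is_dist pi_hat, in_Lambda lam_hat,
      (forall g, is_dist g ->
         Lagr clf Xs Ys w DE gamma pi_hat lam_hat <= Lagr clf Xs Ys w DE gamma g lam_hat + nu)
    & (forall lam, in_Lambda lam ->
         Lagr clf Xs Ys w DE gamma pi_hat lam - nu <= Lagr clf Xs Ys w DE gamma pi_hat lam_hat)].

(* feasibility for the program defining OPT *)
Definition fair_feasible (I : finType) (clf : I -> classifier)
  (DE : seq (X * bool * bool)) (gamma : R) (pi : I -> R) : Prop :=
  is_dist pi /\ forall j : bool, FPR clf DE j pi - FPR clf DE (~~ j) pi <= gamma.

End Defs.

(* Main.v *)
Require Import Defs.
From mathcomp Require Import all_boot all_order all_algebra.
From mathcomp Require Import lra.
Import Order.TTheory GRing.Theory Num.Theory.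
Local Open Scope ring_scope.

Section Aux.
Variable R : realFieldType.

Lemma sum_delta (I : finType) (i0 : I) (f : I -> R) :
  \sum_i (i == i0)%:R * f i = f i0.
Proof.
rewrite (bigD1 i0) //= eqxx mul1r big1 ?addr0 // => i /negbTE ->.
by rewrite mul0r.
Qed.

Lemma dist_delta (I : finType) (i0 : I) : is_dist (fun i : I => ((i == i0)%:R : R)).
Proof.
split; first by move=> i; rewrite ler0n.
have := @sum_delta _ i0 (fun _ => 1); under eq_bigr do rewrite mulr1; by [].
Qed.

Lemma err_h_le1 (X : Type) n (Xs : 'I_n -> X * bool) Ys (w : 'I_n -> R) h :
  (forall j, 0 <= w j) -> \sum_j w j = 1 -> err_h Xs Ys w h <= 1.
Proof.
move=> w0 w1; rewrite /err_h; rewrite -[X in _ <= X]w1; apply: ler_sum => j _.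
by case: (h (Xs j) != Ys j); rewrite /= ?mulr1 ?mulr0.
Qed.

Lemma err_h_ge0 (X : Type) n (Xs : 'I_n -> X * bool) Ys (w : 'I_n -> R) h :
  (forall j, 0 <= w j) -> 0 <= err_h Xs Ys w h.
Proof.
move=> w0; apply: sumr_ge0 => j _; apply: mulr_ge0 => //; exact: ler0n.
Qed.

Lemma Lagr_j (j : bool) (X : Type) (I : finType) (clf : I -> classifier X) n
  (Xs : 'I_n -> X * bool) Ys (w : 'I_n -> R) DE gamma pi lam :
  Lagr clf Xs Ys w DE gamma pi lam =
  err_pi clf Xs Ys w pi
  + lam j * (FPR clf DE j pi - FPR clf DE (~~ j) pi - gamma)
  + lam (~~ j) * (FPR clf DE (~~ j) pi - FPR clf DE j pi - gamma).
Proof. by rewrite /Lagr big_bool /=; case: j => /=; rewrite addrA // addrAC. Qed.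

Lemma Lam2 (j : bool) : in_Lambda (fun k : bool => if k == j then (2 : R) else 0).
Proof.
split; first by move=> k; case: (_ == _); lra.
by rewrite big_bool; case: j => /=; rewrite ?normr0 ger0_norm //; lra.
Qed.

Lemma sum_neg (lam : bool -> R) (j : bool) :
  lam true + lam false = lam j + lam (~~ j).
Proof. by case: j => //=; rewrite addrC. Qed.

End Aux.

Theorem lemma10 (R : realFieldType) (X : Type) (I : finType)
  (clf : I -> classifier X)
  (n : nat) (Xs : 'I_n -> X * bool) (Ys : 'I_n -> bool) (w : 'I_n -> R)
  (DE : seq (X * bool * bool)) (gamma nu : R)
  (pi_hat : I -> R) (lam_hat : bool -> R) :
  (forall j, 0 <= w j) -> \sum_j w j = 1 ->
  (forall j : bool, (0 < neg_count DE j)%N) ->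
  0 <= gamma ->
  (exists i, clf i = (fun xa : X * bool => xa.2)) ->
  (exists i, clf i = (fun xa : X * bool => ~~ xa.2)) ->
  approx_saddle clf Xs Ys w DE gamma nu pi_hat lam_hat ->
  (forall pi, fair_feasible clf DE gamma pi ->
     err_pi clf Xs Ys w pi_hat <= err_pi clf Xs Ys w pi + 2 * nu) /\
  (forall j : bool,
     FPR clf DE j pi_hat - FPR clf DE (~~ j) pi_hat <= gamma + 2 * nu).
Proof.
move=> w0 w1 negc g0 [ipos Hit] [ineg Hiff] [[ph0 ph1] [l0 l1] Hmin Hmax].
have nu0 : 0 <= nu.
  have := Hmin _ (conj ph0 ph1); lra.
have e0 : 0 <= err_pi clf Xs Ys w pi_hat.
  apply: sumr_ge0 => i _; apply: mulr_ge0 => //; exact: err_h_ge0.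
have zL : in_Lambda (fun _ : bool => (0 : R)).
  by split => // ; rewrite big_bool /= normr0; lra.
have HL0 := Hmax _ zL.
split.
  move=> pi [dpi fpi].
  have H := Hmin _ dpi; rewrite !(Lagr_j _ true) /= in H HL0.
  have := fpi true; have := fpi false => /= f1 f2.
  have := l0 true; have := l0 false => a b.
  rewrite !mul0r !addr0 in HL0.
  have : lam_hat true * (FPR clf DE true pi - FPR clf DE false pi - gamma) <= 0.
    by rewrite mulr_ge0_le0 //; lra.
  have : lam_hat false * (FPR clf DE false pi - FPR clf DE true pi - gamma) <= 0.
    by rewrite mulr_ge0_le0 //; lra.
  lra.
move=> j.
have [i0 Hi0] : exists i0, forall xa : X * bool, clf i0 xa = (xa.2 == ~~ j).
  case: j; [exists ineg => xa; rewrite Hiff; by case: xa.2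
           | exists ipos => xa; rewrite Hit; by case: xa.2].
set g := fun i : I => ((i == i0)%:R : R).
have Fg : forall k, FPR clf DE k g = fpr_h R DE k (clf i0).
  by move=> k; rewrite /FPR sum_delta.
have Fj : fpr_h R DE j (clf i0) = 0.
  rewrite /fpr_h.
  have -> : fp_count DE j (clf i0) = 0%N.
    rewrite /fp_count; elim: DE {negc Hmin Hmax HL0 zL Fg} => //= e s ->; rewrite Hi0.
    have nj : forall b : bool, (b == ~~ b) = false by case.
    case E: (e.1.2 == j) => //=; by rewrite (eqP E) nj andbF.
  by rewrite mul0r.
have Fn : fpr_h R DE (~~ j) (clf i0) = 1.
  rewrite /fpr_h.
  have -> : fp_count DE (~~ j) (clf i0) = neg_count DE (~~ j).
    apply: eq_count => e; rewrite Hi0; by case: (_ == _); case: (~~ _).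
  by rewrite divff // pnatr_eq0 -lt0n.
have eg : err_pi clf Xs Ys w g <= 1.
  rewrite /err_pi sum_delta; exact: err_h_le1.
have Hg := Hmin _ (@dist_delta _ _ i0).
rewrite -/g !(Lagr_j _ j) !Fg Fj Fn in Hg.
clear Hi0.
set lam2 := fun k : bool => if k == j then (2 : R) else 0.
have l2 : in_Lambda lam2 by apply: Lam2.
have H2 := Hmax _ l2.
rewrite !(Lagr_j _ j) /lam2 eqxx ifN_eqC in H2.
2: by case: (j).
have ab : lam_hat j + lam_hat (~~ j) <= 2.
  by move: l1; rewrite big_bool /= (ger0_norm (l0 true)) (ger0_norm (l0 false)) (sum_neg _ lam_hat j).
have aj := l0 j; have bj := l0 (~~ j).
move: H2 Hg ab aj bj eg e0.
move: (FPR clf DE j pi_hat) (FPR clf DE (~~ j) pi_hat) (lam_hat j) (lam_hat (~~ j))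
  (err_pi clf Xs Ys w g) (err_pi clf Xs Ys w pi_hat) => A B a b eg e H2 Hg ab aj bj egl e0.
rewrite leNgt; apply/negP => Hx.
set x := A - B - gamma.
have P1 : b * (B - A - gamma) <= 0 by rewrite mulr_ge0_le0 //; lra.
have P2 : 2 * x - nu <= a * x by rewrite /x; lra.
have ag : 0 <= a * gamma by apply: mulr_ge0.
have bg : 0 <= b * gamma by apply: mulr_ge0.
have P3 : a <= 3/2 - x + nu by rewrite /x; lra.
have P4 : a * x <= (3/2 - x + nu) * x by apply: ler_wpM2r => //; rewrite /x; lra.
have P5 : 0 < x * (x - nu) by apply: mulr_gt0; rewrite /x; lra.
have : 0 < x by rewrite /x; lra.
move: P2 P4 P5 Hx; rewrite /x; nra.
Qed.
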